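(* Let $n\ge 2$. For every $T\in\mathrm{C}$ we have $\tilde T T\in\mathrm{C}^{\overline{01}}$. Consequently, $$\mathrm{A}=\begin{cases}\{T\in\mathrm{C}^\times:\ \tilde T T\in(\mathrm{C}^0)^\times\}, & n\equiv 0,2,3 \pmod 4,\\ \{T\in\mathrm{C}^\times:\ \tilde T T\in(\mathrm{C}^0\oplus\mathrm{C}^n)^\times\}, & n\equiv 1\pmod 4.\end{cases}$$
   Context: Let $\mathrm{C}$ be either the real Clifford algebra $C\ell_{p,q}$ with $p+q=n$, or the complex Clifford algebra $C\ell(\mathbb{C}^n)$. It has identity $e$ and generators $e_1,\dots,e_n$ satisfying $e_ae_b+e_be_a=2\eta_{ab}e$. In the real case $\eta=\mathrm{diag}(1,\dots,1,-1,\dots,-1)$ with $p$ entries $+1$ and $q$ entries $-1$. In the complex case $\eta=I_n$. $\mathrm{C}^k$ is the grade-$k$ subspace, spanned by the products $e_{a_1}\cdots e_{a_k}$ with $a_1<\dots<a_k$. The reversion $U\mapsto\tilde U$ is the linear anti-automorphism acting on $\mathrm{C}^k$ as multiplication by $(-1)^{k(k-1)/2}$. For $m=0,1,2,3$ let $\mathrm{C}^{\overline m}=\bigoplus_{k\equiv m \pmod 4}\mathrm{C}^k$, and $\mathrm{C}^{\overline{kl}}=\mathrm{C}^{\overline k}\oplus\mathrm{C}^{\overline l}$. For $S\subseteq\mathrm{C}$, $S^\times$ is the set of elements of $S$ invertible in $\mathrm{C}$. $\mathrm{Z}$ is the center of $\mathrm{C}$: $\mathrm{Z}=\mathrm{C}^0$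 for $n$ even and $\mathrm{Z}=\mathrm{C}^0\oplus\mathrm{C}^n$ for $n$ odd. Define $\mathrm{A}:=\{T\in\mathrm{C}^\times:\ \tilde T T\in\mathrm{Z}^\times\}$. *)

(* Defs.v *)
(* Concrete model of the Clifford algebra with a diagonal
   metric eta : 'I_n -> F over a field F: elements are coefficient functions
   on the blade basis e_A (A a subset of {0..n-1}, e_A = e_{a1}...e_{ak}
   with a1<...<ak). *)
From HB Require Import structures.
From mathcomp Require Import all_boot all_order all_algebra.
From mathcomp Require Import reals complex.
Set Implicit Arguments. Unset Strict Implicit. Unset Printing Implicit Defensive.
Import Order.TTheory GRing.Theory Num.Theory.
Local Open Scope ring_scope.

Section Clifford.
Variables (F : fieldType) (n : nat) (eta : 'I_n -> F).

Definition clif := {ffun {set 'I_n} -> F}.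

(* e_A e_B = blade_coef A B * e_(A symmetric-difference B) *)
Definition blade_coef (A B : {set 'I_n}) : F :=
  (-1) ^+ #|[set p : 'I_n * 'I_n | (p.1 \in A) && (p.2 \in B) && (p.2 < p.1)%N]|
  * \prod_(i in A :&: B) eta i.

Definition symdiff (A B : {set 'I_n}) : {set 'I_n} := (A :\: B) :|: (B :\: A).

Definition cl_mul (x y : clif) : clif :=
  [ffun C => \sum_(A : {set 'I_n}) \sum_(B : {set 'I_n} | symdiff A B == C)
               x A * y B * blade_coef A B].

Definition cl_one : clif := [ffun A : {set 'I_n} => (A == set0)%:R].

Definition cl_rev (x : clif) : clif :=
  [ffun A : {set 'I_n} => (-1) ^+ 'C(#|A|, 2) * x A].

Definition cl_unit (x : clif) : Prop :=
  exists y : clif, cl_mul x y = cl_one /\ cl_mul y x = cl_one.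

(* x in C^{\bar 0} (+) C^{\bar 1}: only grades k = 0,1 mod 4 *)
Definition in_grade01bar (x : clif) : Prop :=
  forall A : {set 'I_n}, (2 <= #|A| %% 4)%N -> x A = 0.

Definition in_grade0 (x : clif) : Prop :=
  forall A : {set 'I_n}, A != set0 -> x A = 0.

Definition in_grade0n (x : clif) : Prop :=
  forall A : {set 'I_n}, (0 < #|A| < n)%N -> x A = 0.

Definition in_center (x : clif) : Prop :=
  if odd n then in_grade0n x else in_grade0 x.

Definition in_Aset (T : clif) : Prop :=
  cl_unit T /\ in_center (cl_mul (cl_rev T) T) /\ cl_unit (cl_mul (cl_rev T) T).

Definition clifford_claim : Prop :=
  (forall T : clif, in_grade01bar (cl_mul (cl_rev T) T)) /\
  (forall T : clif, in_Aset T <->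
     (cl_unit T /\
      (if (n %% 4 == 1)%N then in_grade0n (cl_mul (cl_rev T) T)
       else in_grade0 (cl_mul (cl_rev T) T)) /\
      cl_unit (cl_mul (cl_rev T) T))).

End Clifford.

Definition signature_metric (F : fieldType) (n p : nat) : 'I_n -> F :=
  fun i => if (i < p)%N then 1 else -1.

Definition identity_metric (F : fieldType) (n : nat) : 'I_n -> F :=
  fun _ => 1.

(* Main.v *)
Require Import Defs.
From HB Require Import structures.
From mathcomp Require Import all_boot all_order all_algebra.
From mathcomp Require Import reals complex ring zify.
Set Implicit Arguments. Unset Strict Implicit. Unset Printing Implicit Defensive.
Import Order.TTheory GRing.Theory Num.Theory.
Local Open Scope nat_scope.

Lemma bin2D m k : 'C(m + k, 2) = 'C(m, 2) + 'C(k, 2) + m * k.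
Proof.
elim: k => [|k IH]; first by rewrite muln0 !addn0.
rewrite addnS binS IH bin1 binS bin1 mulnS; lia.
Qed.

Lemma odd_bin2_double k : odd 'C(k + k, 2) = odd k.
Proof. by rewrite bin2D oddD oddD addbb /= oddM andbb. Qed.

Lemma odd_bin2_mod4 k : odd 'C(k, 2) = (2 <= k %% 4).
Proof.
rewrite {1}(divn_eq k 4) bin2D oddD oddD.
have -> : k %/ 4 * 4 = (k %/ 4 * 2) + (k %/ 4 * 2) by lia.
rewrite odd_bin2_double oddM /= andbF /= oddM oddD addbb /= addbF.
have : k %% 4 < 4 by rewrite ltn_mod.
by case: (k %% 4) => [|[|[|[|]]]].
Qed.

Lemma parity_nat d k a b i1 i2 :
  d + k.*2 = a + b -> i1 + i2 + k = a * b ->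
  odd ('C(d, 2) + i1) = odd ('C(a, 2) + 'C(b, 2) + i2).
Proof.
move=> Hd Hi.
have H : 'C(d + k.*2, 2) = 'C(a + b, 2) by rewrite Hd.
move: H; rewrite -addnn bin2D [in X in _ = X -> _]bin2D -Hi => /(congr1 odd).
rewrite !oddD odd_bin2_double oddM /= oddD addbb andbF addbF.
by case: (odd 'C(d,2)); case: (odd i1); case: (odd i2); case: (odd k);
   case: (odd 'C(a,2)); case: (odd 'C(b,2)).
Qed.

Section Gen.
Variables (n : nat).
Definition invset (A B : {set 'I_n}) :=
  [set p : 'I_n * 'I_n | (p.1 \in A) && (p.2 \in B) && (p.2 < p.1)%N].

Lemma card_inv A B : #|invset A B| + #|invset B A| + #|A :&: B| = #|A| * #|B|.
Proof.
have sw : injective (fun p : 'I_n * 'I_n => (p.2, p.1)) by move=> [? ?] [? ?] [-> ->].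
have -> : #|invset B A| = #|[set p : 'I_n * 'I_n | (p.1 \in A) && (p.2 \in B) && (p.1 < p.2)%N]|.
  rewrite -(card_preimset (invset B A) sw); apply: eq_card => -[i j].
  by rewrite !inE /= [(j \in B) && _]andbC.
have -> : #|A :&: B| = #|[set p : 'I_n * 'I_n | (p.1 \in A) && (p.2 \in B) && (p.1 == p.2)]|.
  have di : injective (fun i : 'I_n => (i, i)) by move=> ? ? [].
  rewrite -(card_imset _ di); apply: eq_card => -[i j].
  rewrite !inE /=; apply/imsetP/idP => [[k] | /andP[/andP[Ha Hb] /eqP Hij]].
    by rewrite !inE => /andP[? ?] [-> ->]; rewrite eqxx andbT; apply/andP.
  by subst j; exists i => //; rewrite inE Ha Hb.
rewrite -(cardsX A B).
rewrite -(cardsID [set p : 'I_n * 'I_n | (p.2 < p.1)%N] (setX A B)).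
rewrite -(cardsID [set p : 'I_n * 'I_n | (p.1 < p.2)%N] (setX A B :\: _)).
rewrite -addnA; congr (_ + (_ + _)); apply: eq_card => -[i j]; rewrite !inE /=.
- by rewrite andbC.
- by case: (i \in A); case: (j \in B) => //=; rewrite ?andbT; case: (ltngtP i j).
- have -> : (i == j) = (~~ (i < j)%N && ~~ (j < i)%N).
    by rewrite -val_eqE /=; case: (ltngtP i j).
  by case: (i \in A); case: (j \in B); case: (i < j)%N; case: (j < i)%N.
Qed.

Lemma card_symdiff (A B : {set 'I_n}) : #|symdiff A B| + (#|A :&: B|).*2 = #|A| + #|B|.
Proof.
rewrite /symdiff cardsU.
have -> : (A :\: B) :&: (B :\: A) = set0.
  by apply/setP => i; rewrite !inE; case: (i \in A); case: (i \in B).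
rewrite cards0 subn0 -addnn.
have h1 := cardsID B A. have h2 := cardsID A B. rewrite setIC in h2. lia.
Qed.
End Gen.

Local Open Scope ring_scope.

Section Alg.
Variables (F : fieldType) (n : nat) (eta : 'I_n -> F).

Lemma sign_id (A B : {set 'I_n}) :
  (-1) ^+ 'C(#|symdiff A B|, 2) * blade_coef eta A B =
  (-1) ^+ 'C(#|A|, 2) * (-1) ^+ 'C(#|B|, 2) * blade_coef eta B A.
Proof.
rewrite /blade_coef setIC !mulrA -!exprD -signr_odd -[in RHS]signr_odd.
rewrite (@parity_nat _ #|A :&: B| #|A| #|B| _ #|invset B A|) //.
  exact: card_symdiff.
rewrite -card_inv; congr (_ + _ + _); rewrite setIC //.
Qed.

Lemma rev_mul (x y : clif F n) :
  cl_rev (cl_mul eta x y) = cl_mul eta (cl_rev y) (cl_rev x).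
Proof.
apply/ffunP => C; rewrite !ffunE big_distrr /=.
under eq_bigr do rewrite big_distrr /= big_mkcond /=.
rewrite exchange_big /=; apply: eq_bigr => B _.
rewrite [RHS]big_mkcond /=; apply: eq_bigr => A _.
have -> : symdiff B A = symdiff A B by rewrite /symdiff setUC.
case: eqP => // <-; rewrite !ffunE.
transitivity (x A * y B * ((-1) ^+ 'C(#|symdiff A B|, 2) * blade_coef eta A B)); first ring.
rewrite sign_id; ring.
Qed.

Lemma rev_rev (x : clif F n) : cl_rev (cl_rev x) = x.
Proof. by apply/ffunP => A; rewrite !ffunE mulrA -exprD addnn -signr_odd odd_double mul1r. Qed.

Lemma rev_fixed (T : clif F n) : cl_rev (cl_mul eta (cl_rev T) T) = cl_mul eta (cl_rev T) T.
Proof. by rewrite rev_mul rev_rev. Qed.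

Lemma grade01 (h2 : (2 : F) != 0) (T : clif F n) : in_grade01bar (cl_mul eta (cl_rev T) T).
Proof.
move=> A HA; set S := cl_mul eta (cl_rev T) T.
have := congr1 (fun f : clif F n => f A) (rev_fixed T); rewrite -/S ffunE.
rewrite -signr_odd odd_bin2_mod4 HA expr1 => H.
have : S A * 2 = 0 by rewrite mulr_natr mulr2n -{1}H mulN1r addNr.
by move/eqP; rewrite mulf_eq0 (negbTE h2) orbF => /eqP.
Qed.

Lemma claim (h2 : (2 : F) != 0) : clifford_claim eta.
Proof.
split; first exact: grade01.
move=> T; have G := grade01 h2 T; set S := cl_mul eta (cl_rev T) T in G *.
rewrite /in_Aset /in_center -/S.
suff E : (if odd n then in_grade0n S else in_grade0 S) <->
         (if (n %% 4 == 1)%N then in_grade0n S else in_grade0 S).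
  by split=> -[h1 [h2' h3]]; split=> //; split=> //; apply/E.
have Hodd : odd n = ((n %% 4 == 1) || (n %% 4 == 3))%N.
  rewrite {1}(divn_eq n 4) oddD oddM /= andbF /=.
  have : (n %% 4 < 4)%N by rewrite ltn_mod.
  by case: (n %% 4)%N => [|[|[|[|]]]].
rewrite Hodd; case: eqP => [//|_]; case: eqP => [H3|_] /=; last by [].
split=> [H A HA | H A /andP[HA1 HA2]].
  case: (ltnP #|A| n) => Hn; first by apply: H; rewrite card_gt0 HA.
  have Hle : (#|A| <= n)%N by rewrite -[X in (_ <= X)%N](card_ord n) max_card.
  have E : #|A| = n by apply/eqP; rewrite eqn_leq Hn Hle.
  by apply: G; rewrite E H3.
apply: H; rewrite -card_gt0; exact: HA1.
Qed.
End Alg.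

Theorem mainTheorem5 (n : nat) (hn : (2 <= n)%N) :
  (* real Clifford algebras Cl_{p,q}, p + q = n *)
  (forall (R : realType) (p q : nat), (p + q)%N = n ->
     @clifford_claim R n (@signature_metric R n p)) /\
  (* complex Clifford algebra Cl(C^n), C = R[i] *)
  (forall R : realType, @clifford_claim (complex R) n (@identity_metric (complex R) n)).
Proof.
split.
- move=> R p q _; apply: claim; by rewrite pnatr_eq0.
- move=> R; apply: claim; by rewrite pnatr_eq0.
Qed.
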